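(* Let $k$ be a positive integer and $m,n$ nonnegative integers. Let $r:=m \bmod k$ and $s:=n \bmod k$. Then \[ \nu_k(K_{m,n}) \le \frac{(m-r)(n-s)}{4k^2}(m-k+r)(n-k+s) \le \frac{1}{k^2}\binom{m}{2}\binom{n}{2}. \]
   Context: A book with $k$ pages consists of a line (the spine) and $k$ half-planes (the pages) whose common boundary is the spine. A $k$-page drawing of a graph places all vertices on the spine and draws each edge inside a single page (edges may cross). The $k$-page crossing number $\nu_k(G)$ is the minimum number of crossings over all $k$-page drawings of $G$. *)

(* Defs.v *)
From mathcomp Require Import all_boot all_order all_algebra all_fingroup.
Set Implicit Arguments. Unset Strict Implicit. Unset Printing Implicit Defensive.

Definition Kvert (m n : nat) : finType := ('I_m + 'I_n)%type.
Definition Kedge (m n : nat) : finType := ('I_m * 'I_n)%type.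

Definition Kend1 m n (e : Kedge m n) : Kvert m n := inl e.1.
Definition Kend2 m n (e : Kedge m n) : Kvert m n := inr e.2.

(* A k-page drawing (book drawing): a linear order of the vertices along the
   spine (given by a permutation of the vertices followed by the canonical
   enumeration, so every linear order occurs), and an assignment of each edge
   to one of the k pages. *)
Definition drawing (k m n : nat) : finType :=
  (prod {perm Kvert m n} {ffun Kedge m n -> 'I_k}).

Definition spos k m n (D : drawing k m n) (v : Kvert m n) : nat :=
  enum_rank (D.1 v).

Definition elo k m n (D : drawing k m n) (e : Kedge m n) : nat :=
  minn (spos D (Kend1 e)) (spos D (Kend2 e)).
Definition ehi k m n (D : drawing k m n) (e : Kedge m n) : nat :=
  maxn (spos D (Kend1 e)) (spos D (Kend2 e)).

(* Each crossing unordered pair is counted by exactly one ordered pair. *)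
Definition bcross k m n (D : drawing k m n) (e f : Kedge m n) : bool :=
  (D.2 e == D.2 f) && (elo D e < elo D f < ehi D e) && (ehi D e < ehi D f).

Definition crossings k m n (D : drawing k m n) : nat :=
  #|[set p : Kedge m n * Kedge m n | bcross D p.1 p.2]|.

(* The seed #|Kedge m n|^2 is an upper bound on the crossings of
   every drawing, so for k >= 1 (drawings exist) it does not affect the min. *)
Definition nu_K (k m n : nat) : nat :=
  \big[minn/(#|Kedge m n| ^ 2)%N]_(D : drawing k m n) crossings D.

(* Main.v *)
Require Import Defs.
From mathcomp Require Import all_boot all_order all_algebra.
Import Order.TTheory GRing.Theory Num.Theory.
Local Open Scope ring_scope.
From mathcomp Require Import all_fingroup zify ring lra.
Local Close Scope ring_scope.

Lemma bigmin_le_seq (I : eqType) (s : seq I) (F : I -> nat) a x :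
  x \in s -> (\big[minn/a]_(i <- s) F i <= F x)%N.
Proof.
elim: s => [//|y s IH]; rewrite in_cons big_cons => /orP [/eqP ->|H].
  exact: geq_minl.
exact: leq_trans (geq_minr _ _) (IH H).
Qed.

Section Rank.
Variables (T : finType) (key : T -> nat).
Definition vrank (v : T) : nat := #|[set w | key w < key v]|.
Lemma vrank_lt v : vrank v < #|T|.
Proof.
rewrite /vrank; apply: (@leq_trans #|v |: [set w | key w < key v]|).
  by rewrite cardsU1 inE ltnn.
by rewrite -cardsT subset_leq_card // subsetT.
Qed.
Lemma vrank_mono v w : (vrank v < vrank w) = (key v < key w).
Proof.
case: (ltnP (key v) (key w)) => H.
  apply: proper_card; apply/properP; split.
    by apply/subsetP => u; rewrite !inE => Hu; exact: ltn_trans Hu H.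
  by exists v; rewrite !inE ?ltnn.
apply/negbTE; rewrite -leqNgt; apply: subset_leq_card.
by apply/subsetP => u; rewrite !inE => Hu; exact: leq_trans Hu H.
Qed.
Hypothesis key_inj : injective key.
Lemma vrank_inj : injective vrank.
Proof.
move=> v w E; apply: key_inj.
have H1 := vrank_mono v w; have H2 := vrank_mono w v.
rewrite E ltnn in H1 H2.
move/esym/negbT: H1; move/esym/negbT: H2; rewrite -!leqNgt => H1 H2.
by apply/eqP; rewrite eqn_leq H1 H2.
Qed.
Definition sortfun (v : T) : T := enum_val (Ordinal (vrank_lt v) : 'I_#|T|).
Lemma sortfun_inj : injective sortfun.
Proof.
move=> v w E; apply: vrank_inj.
have := congr1 (@enum_rank T) E; rewrite /sortfun !enum_valK.
by move/(congr1 val).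
Qed.
Definition sortperm : {perm T} := perm sortfun_inj.
Lemma sortperm_rank v : (enum_rank (sortperm v) : nat) = vrank v.
Proof. by rewrite permE /sortfun enum_valK. Qed.
End Rank.
Set Implicit Arguments. Unset Strict Implicit. Unset Printing Implicit Defensive.

Definition vcode k m n (v : Kvert m n) : nat :=
  match v with inl i => 2 * (i %% k) | inr j => (2 * (j %% k)).+1 end.
Definition vidx m n (v : Kvert m n) : nat :=
  match v with inl i => val i | inr j => val j end.
Definition vkey k m n (v : Kvert m n) : nat := vcode k v * (m + n) + vidx v.

Lemma lex_lt N a b u w : u < N -> w < N ->
  (a * N + u < b * N + w) = (a < b) || ((a == b) && (u < w)).
Proof.
move=> hu hw; case: (ltngtP a b) => H /=.
- have : a.+1 * N <= b * N by rewrite leq_mul2r H orbT.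
  rewrite mulSn; lia.
- have : b.+1 * N <= a * N by rewrite leq_mul2r H orbT.
  rewrite mulSn; lia.
- by rewrite H ltn_add2l.
Qed.

Lemma vidx_lt m n (v : Kvert m n) : vidx v < m + n.
Proof. case: v => [i|j] /=; [have := ltn_ord i | have := ltn_ord j]; lia. Qed.

Lemma vkey_inj k m n : injective (@vkey k m n).
Proof.
move=> v w E.
have H1 : ~~ (vkey k v < vkey k w) by rewrite E ltnn.
have H2 : ~~ (vkey k w < vkey k v) by rewrite E ltnn.
rewrite /vkey !lex_lt ?vidx_lt // in H1 H2.
case: v w E H1 H2 => [i|j] [i'|j'] /= _; try lia.
- move=> H1 H2; congr inl; apply: val_inj => /=; lia.
- move=> H1 H2; congr inr; apply: val_inj => /=; lia.
Qed.

Definition Dk k m n (hk : 0 < k) : drawing k m n :=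
  (@sortperm _ _ (@vkey_inj k m n),
   [ffun e : Kedge m n => Ordinal (ltn_pmod (e.1 %% k + e.2 %% k) hk)]).

Lemma spos_Dk k m n (hk : 0 < k) v : spos (Dk m n hk) v = @vrank _ (@vkey k m n) v.
Proof. by rewrite /spos /Dk /= sortperm_rank. Qed.

Lemma spos_lt k m n (hk : 0 < k) v w :
  (spos (Dk m n hk) v < spos (Dk m n hk) w) =
  (vcode k v < vcode k w) || ((vcode k v == vcode k w) && (vidx v < vidx w)).
Proof. by rewrite !spos_Dk vrank_mono /vkey lex_lt ?vidx_lt. Qed.

Lemma mod_sum k a b : 0 < k -> a < k -> b < k ->
  (a + b) %% k = if a + b < k then a + b else a + b - k.
Proof.
move=> hk ha hb; case: ifP => H; first by rewrite modn_small.
have -> : a + b = 1 * k + (a + b - k) by lia.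
rewrite modnMDl modn_small; lia.
Qed.

Lemma cross_Dk k m n (hk : 0 < k) (e f : Kedge m n) :
  bcross (Dk m n hk) e f ->
  [&& e.1 < f.1, e.2 < f.2, e.1 %% k == f.1 %% k & e.2 %% k == f.2 %% k].
Proof.
case: e => i j; case: f => i2 j2.
rewrite /bcross /elo /ehi /Kend1 /Kend2 /=.
move=> /andP [/andP [Hpg Hlo] Hhi].
rewrite !ffunE in Hpg; move/eqP: Hpg => /(congr1 val) /= Hpg.
have L12 := spos_lt hk (inl i : Kvert m n) (inr j : Kvert m n).
have L13 := spos_lt hk (inl i : Kvert m n) (inl i2 : Kvert m n).
have L14 := spos_lt hk (inl i : Kvert m n) (inr j2 : Kvert m n).
have L21 := spos_lt hk (inr j : Kvert m n) (inl i : Kvert m n).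
have L23 := spos_lt hk (inr j : Kvert m n) (inl i2 : Kvert m n).
have L24 := spos_lt hk (inr j : Kvert m n) (inr j2 : Kvert m n).
have L31 := spos_lt hk (inl i2 : Kvert m n) (inl i : Kvert m n).
have L32 := spos_lt hk (inl i2 : Kvert m n) (inr j : Kvert m n).
have L34 := spos_lt hk (inl i2 : Kvert m n) (inr j2 : Kvert m n).
have L41 := spos_lt hk (inr j2 : Kvert m n) (inl i : Kvert m n).
have L42 := spos_lt hk (inr j2 : Kvert m n) (inr j : Kvert m n).
have L43 := spos_lt hk (inr j2 : Kvert m n) (inl i2 : Kvert m n).
rewrite /= in L12 L13 L14 L21 L23 L24 L31 L32 L34 L41 L42 L43.
move: Hpg Hlo Hhi L12 L13 L14 L21 L23 L24 L31 L32 L34 L41 L42 L43.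
set p1 := spos _ (inl i). set p2 := spos _ (inr j).
set p3 := spos _ (inl i2). set p4 := spos _ (inr j2).
have hx : i %% k < k := ltn_pmod i hk. have hy : j %% k < k := ltn_pmod j hk.
have hx2 : i2 %% k < k := ltn_pmod i2 hk. have hy2 : j2 %% k < k := ltn_pmod j2 hk.
move: hx hy hx2 hy2.
set x := i %% k. set y := j %% k. set x2 := i2 %% k. set y2 := j2 %% k.
clearbody p1 p2 p3 p4 x y x2 y2.
move=> hx hy hx2 hy2 Hpg Hlo Hhi L12 L13 L14 L21 L23 L24 L31 L32 L34 L41 L42 L43.
rewrite !mod_sum // in Hpg.
have Hpg' : x + y = x2 + y2 \/ x + y = x2 + y2 + k \/ x2 + y2 = x + y + k.
  by move: Hpg; clear -hx hy hx2 hy2; case: ifP; case: ifP; lia.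
clear Hpg.
have [Hxy|Hxy] := leqP x y; have [Hxy2|Hxy2] := leqP x2 y2.
- have E1 : p1 < p2 by rewrite L12; clear -Hxy Hxy2; lia.
  have E2 : p3 < p4 by rewrite L34; clear -Hxy Hxy2; lia.
  rewrite (minn_idPl (ltnW E1)) (maxn_idPr (ltnW E1)) in Hlo Hhi.
  rewrite (minn_idPl (ltnW E2)) (maxn_idPr (ltnW E2)) in Hlo Hhi.
  move/andP: Hlo => [H1 H2].
  clear L12 L14 L21 L23 L31 L34 L41 L42 L43.
  move: L13 L32 L24; rewrite ?H1 ?H2 ?Hhi => K1 K2 K3.
  clear -K1 K2 K3 Hpg' hx hy hx2 hy2 Hxy Hxy2; lia.
- have E1 : p1 < p2 by rewrite L12; clear -Hxy Hxy2; lia.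
  have E2 : p4 < p3 by rewrite L43; clear -Hxy Hxy2; lia.
  rewrite (minn_idPl (ltnW E1)) (maxn_idPr (ltnW E1)) in Hlo Hhi.
  rewrite (minn_idPr (ltnW E2)) (maxn_idPl (ltnW E2)) in Hlo Hhi.
  move/andP: Hlo => [H1 H2].
  clear L12 L13 L21 L24 L31 L32 L34 L41 L43.
  move: L14 L42 L23; rewrite ?H1 ?H2 ?Hhi => K1 K2 K3.
  clear -K1 K2 K3 Hpg' hx hy hx2 hy2 Hxy Hxy2; lia.
- have E1 : p2 < p1 by rewrite L21; clear -Hxy Hxy2; lia.
  have E2 : p3 < p4 by rewrite L34; clear -Hxy Hxy2; lia.
  rewrite (minn_idPr (ltnW E1)) (maxn_idPl (ltnW E1)) in Hlo Hhi.
  rewrite (minn_idPl (ltnW E2)) (maxn_idPr (ltnW E2)) in Hlo Hhi.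
  move/andP: Hlo => [H1 H2].
  clear L12 L13 L21 L24 L32 L34 L41 L42 L43.
  move: L23 L31 L14; rewrite ?H1 ?H2 ?Hhi => K1 K2 K3.
  clear -K1 K2 K3 Hpg' hx hy hx2 hy2 Hxy Hxy2; lia.
- have E1 : p2 < p1 by rewrite L21; clear -Hxy Hxy2; lia.
  have E2 : p4 < p3 by rewrite L43; clear -Hxy Hxy2; lia.
  rewrite (minn_idPr (ltnW E1)) (maxn_idPl (ltnW E1)) in Hlo Hhi.
  rewrite (minn_idPr (ltnW E2)) (maxn_idPl (ltnW E2)) in Hlo Hhi.
  move/andP: Hlo => [H1 H2].
  clear L12 L14 L21 L23 L31 L32 L34 L42 L43.
  move: L24 L41 L13; rewrite ?H1 ?H2 ?Hhi => K1 K2 K3.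
  clear -K1 K2 K3 Hpg' hx hy hx2 hy2 Hxy Hxy2; lia.
Qed.

Definition PA (k m : nat) : {set 'I_m * 'I_m} :=
  [set p : 'I_m * 'I_m | (p.1 < p.2) && (p.1 %% k == p.2 %% k)].

Lemma cross_le k m n (hk : 0 < k) :
  crossings (Dk m n hk) <= #|PA k m| * #|PA k n|.
Proof.
rewrite /crossings -cardsX.
set S := [set p | _].
pose g (p : Kedge m n * Kedge m n) := ((p.1.1, p.2.1), (p.1.2, p.2.2)).
have ginj : injective g.
  by move=> [[a b] [c d]] [[a' b'] [c' d']] /= [-> -> -> ->].
rewrite -(card_imset S ginj); apply: subset_leq_card.
apply/subsetP => z /imsetP [[e f] He ->]; rewrite inE in He.
have := cross_Dk He; case/and4P => H1 H2 H3 H4.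
by rewrite !inE /= H1 H2 H3 H4.
Qed.

Lemma inner_le k m (hk : 0 < k) (i2 : 'I_m) :
  #|[set i : 'I_m | (i < i2) && (i %% k == i2 %% k)]| <= i2 %/ k.
Proof.
rewrite cardE.
set s := enum _.
have -> : size s = size [seq val i %/ k | i <- s] by rewrite size_map.
rewrite -[X in _ <= X](size_iota 0).
apply: uniq_leq_size.
  rewrite map_inj_in_uniq ?enum_uniq // => a b.
  rewrite !mem_enum !inE => /andP [_ /eqP Ha] /andP [_ /eqP Hb] E.
  apply: val_inj; rewrite /= (divn_eq a k) (divn_eq b k) E Ha Hb //.
move=> t /mapP [a]; rewrite mem_enum inE => /andP [Ha /eqP Hm] ->.
rewrite mem_iota /= add0n.
have L : a %/ k <= i2 %/ k by apply: leq_div2r; exact: ltnW.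
rewrite ltn_neqAle L andbT; apply/negP => /eqP E.
move: Ha; rewrite (divn_eq a k) (divn_eq i2 k) E Hm ltnn.
by [].
Qed.

Lemma PA_le k m (hk : 0 < k) : #|PA k m| <= \sum_(0 <= i < m) i %/ k.
Proof.
rewrite big_mkord -sum1_card big_mkcond /=.
have -> : \sum_(p : 'I_m * 'I_m) (if p \in PA k m then 1 else 0) =
   \sum_(i : 'I_m) \sum_(i2 : 'I_m) (if (i, i2) \in PA k m then 1 else 0).
  by rewrite pair_bigA; apply: eq_bigr => -[a b].
rewrite exchange_big /=; apply: leq_sum => i2 _.
rewrite -big_mkcond sum1_card.
apply: leq_trans (inner_le hk i2); apply: subset_leq_card.
apply/subsetP => i; rewrite unfold_in /= => H. have : (i, i2) \in PA k m by []. by rewrite !inE.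
Qed.

Lemma Sform k n : 0 < k ->
  2 * \sum_(0 <= i < n) i %/ k + (n %/ k) * k = (n %/ k) * (k * (n %/ k) + 2 * (n %% k)).
Proof.
move=> hk; elim: n => [|n IH]; first by rewrite big_nil div0n.
rewrite big_nat_recr //=.
move: IH; have Hn := divn_eq n k; have hr := ltn_pmod n hk.
set q := n %/ k in Hn *; set r := n %% k in Hn hr *.
have -> : n.+1 = q * k + r.+1 by rewrite Hn addnS.
move=> IH.
move: IH; set S := \sum_(0 <= i < n) _; move=> IH.
clearbody q r S.
have [H|H] := ltnP r.+1 k.
- rewrite divnMDl // divn_small // modnMDl modn_small // addn0.
  nia.
- have Hk : r.+1 = k by lia.
  rewrite Hk -mulSnr mulnK // modnMl.
  rewrite -Hk in IH *. nia.
Qed.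

Lemma S_le_bin k n : 0 < k -> k * \sum_(0 <= i < n) i %/ k <= 'C(n, 2).
Proof.
move=> hk; rewrite -bin2_sum big_distrr /=; apply: leq_sum => i _.
by rewrite mulnC leq_trunc_div.
Qed.
Unset Implicit Arguments.
Local Open Scope ring_scope.

Lemma rat_S k m : (0 < k)%N ->
  ((m%:R - (m %% k)%:R) * (m%:R - k%:R + (m %% k)%:R) : rat)
   = 2 * k%:R * (\sum_(0 <= i < m) i %/ k)%:R.
Proof.
move=> hk; have F := Sform m hk; have Hm := divn_eq m k.
move: F Hm; set S := (\sum_(0 <= i < m) _)%N; set q := (m %/ k)%N; set r := (m %% k)%N.
clearbody S q r => F Hm.
have Hm' : (m%:R : rat) = q%:R * k%:R + r%:R by rewrite Hm natrD natrM.
have F' : (S%:R : rat) = (q%:R * (k%:R * q%:R + 2 * r%:R) - q%:R * k%:R) / 2.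
  have := congr1 (fun x : nat => x%:R : rat) F; rewrite /= !natrD !natrM => H.
  nra.
by rewrite Hm' F'; field.
Qed.

Theorem theorem6 (k m n : nat) (hk : (0 < k)%N) :
  ((nu_K k m n)%:R : rat)
    <= ((m%:R - (m %% k)%:R) * (n%:R - (n %% k)%:R)) / (4 * k%:R ^+ 2)
       * ((m%:R - k%:R + (m %% k)%:R) * (n%:R - k%:R + (n %% k)%:R))
  /\ ((m%:R - (m %% k)%:R) * (n%:R - (n %% k)%:R)) / (4 * k%:R ^+ 2)
       * ((m%:R - k%:R + (m %% k)%:R) * (n%:R - k%:R + (n %% k)%:R))
    <= ('C(m, 2))%:R * ('C(n, 2))%:R / k%:R ^+ 2 :> rat.
Proof.
set Sm := (\sum_(0 <= i < m) i %/ k)%N; set Sn := (\sum_(0 <= i < n) i %/ k)%N.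
have Hnu : (nu_K k m n <= Sm * Sn)%N.
  apply: (@leq_trans (crossings (Dk m n hk))).
    exact: bigmin_le_seq (mem_index_enum _).
  exact: leq_trans (cross_le m n hk) (leq_mul (PA_le m hk) (PA_le n hk)).
have kne : (k%:R : rat) != 0 by rewrite pnatr_eq0 -lt0n.
have E : ((m%:R - (m %% k)%:R) * (n%:R - (n %% k)%:R)) / (4 * k%:R ^+ 2)
       * ((m%:R - k%:R + (m %% k)%:R) * (n%:R - k%:R + (n %% k)%:R)) = (Sm * Sn)%:R :> rat.
  have E1 := rat_S k m hk; have E2 := rat_S k n hk.
  rewrite natrM.
  transitivity (((m%:R - (m %% k)%:R) * (m%:R - k%:R + (m %% k)%:R)) *
                ((n%:R - (n %% k)%:R) * (n%:R - k%:R + (n %% k)%:R)) / (4 * k%:R ^+ 2) : rat).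
    by field; rewrite kne.
  by rewrite E1 E2; field.
rewrite E; split; first by rewrite ler_nat.
have H1 := S_le_bin m hk; have H2 := S_le_bin n hk.
have kpos : (0 : rat) < k%:R ^+ 2 by rewrite exprn_gt0 // ltr0n.
rewrite ler_pdivlMr // natrM.
have -> : (Sm%:R * Sn%:R * k%:R ^+ 2 : rat) = (k * Sm)%:R * (k * Sn)%:R.
  by rewrite !natrM; ring.
by rewrite -natrM -natrM ler_nat leq_mul.
Qed.
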